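(* For sets of tags $A, B \subseteq T$, the map $\phi_{A\to B} : O_A \to O_B$ is a lattice homomorphism preserving arbitrary meets and joins: for all $O' \subseteq O_A$, (i) $\bigwedge\{\phi_{A\to B}(f) \mid f \in O'\} = \phi_{A\to B}(\bigwedge O')$, and (ii) $\bigvee\{\phi_{A\to B}(f) \mid f\in O'\} = \phi_{A\to B}(\bigvee O')$.
   Context: $T$ is a set of tags and $O$ a set of options. For $T' \subseteq T$, the options lattice $O_{T'}$ consists of all functions $f : T' \to \mathcal{P}(O)$, ordered pointwise by inclusion; the meet $\bigwedge$ of a subset is the pointwise intersection and the join $\bigvee$ is the pointwise union. The map $\phi_{A\to B} : O_A \to O_B$ is defined by $\phi_{A\to B}(f)(t) = f(t)$ if $t \in A\cap B$ and $\phi_{A\to B}(f)(t) = O$ if $t \in B \setminus A$. *)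

(* Defs.v *)
From Stdlib Require Import ClassicalEpsilon.

Definition optlat (T O : Type) (A : T -> Prop) : Type :=
  {t : T | A t} -> (O -> Prop).

Definition olmeet {T O : Type} {A : T -> Prop} (S : optlat T O A -> Prop)
  : optlat T O A :=
  fun t o => forall f, S f -> f t o.

Definition oljoin {T O : Type} {A : T -> Prop} (S : optlat T O A -> Prop)
  : optlat T O A :=
  fun t o => exists f, S f /\ f t o.

Definition phi {T O : Type} (A B : T -> Prop) (f : optlat T O A) : optlat T O B :=
  fun t =>
    match excluded_middle_informative (A (proj1_sig t)) with
    | left h => f (exist _ (proj1_sig t) h)
    | right _ => fun _ => True
    end.

Definition phi_img {T O : Type} (A B : T -> Prop) (S : optlat T O A -> Prop)
  : optlat T O B -> Prop :=
  fun g => exists f, S f /\ g = phi A B f.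

(* Main.v *)
Require Import Defs.
From Stdlib Require Import FunctionalExtensionality PropExtensionality ClassicalEpsilon.

Theorem theorem4 (T O : Type) (A B : T -> Prop) (S : optlat T O A -> Prop) :
  olmeet (phi_img A B S) = phi A B (olmeet S) /\
  ((exists f, S f) -> oljoin (phi_img A B S) = phi A B (oljoin S)).
Proof.
  split.
  - apply functional_extensionality; intro t; apply functional_extensionality; intro o.
    apply propositional_extensionality.
    unfold olmeet, phi, phi_img.
    destruct (excluded_middle_informative (A (proj1_sig t))) as [h|h].
    + split.
      * intros H f Sf. specialize (H (phi A B f) (ex_intro _ f (conj Sf eq_refl))).
        unfold phi in H. destruct (excluded_middle_informative (A (proj1_sig t))) as [h'|h'].
        -- rewrite (proof_irrelevance _ h' h) in H. exact H.
        -- contradiction.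
      * intros H g [f1 [Sf ->]]. unfold phi.
        destruct (excluded_middle_informative (A (proj1_sig t))) as [h'|h'].
        -- rewrite (proof_irrelevance _ h' h). exact (H f1 Sf).
        -- exact I.
    + split; intros; [exact I|].
      destruct H0 as [f1 [Sf ->]]. unfold phi.
      destruct (excluded_middle_informative (A (proj1_sig t))); [contradiction|exact I].
  - intros [f0 Sf0].
    apply functional_extensionality; intro t; apply functional_extensionality; intro o.
    apply propositional_extensionality.
    unfold oljoin, phi, phi_img.
    destruct (excluded_middle_informative (A (proj1_sig t))) as [h|h].
    + split.
      * intros [g [[f1 [Sf ->]] H]]. unfold phi in H.
        destruct (excluded_middle_informative (A (proj1_sig t))) as [h'|h'].
        -- rewrite (proof_irrelevance _ h' h) in H. exists f1; auto.
        -- contradiction.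
      * intros [f [Sf H]]. exists (phi A B f). split; [exists f; auto|].
        unfold phi. destruct (excluded_middle_informative (A (proj1_sig t))) as [h'|h'].
        -- rewrite (proof_irrelevance _ h' h). exact H.
        -- exact I.
    + split; intros; [exact I|].
      exists (phi A B f0). split; [exists f0; auto|].
      unfold phi. destruct (excluded_middle_informative (A (proj1_sig t))); [contradiction|exact I].
Qed.
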